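(* For each integer $N\ge1$, write $N=4m+k$ with $m\in\mathbb{N}$, $k\in\{0,1,2,3\}$, let $\alpha=((k+1)\bmod 4)-1$, and set $N_1^\star=(N-\alpha)/4$, $N_2^\star=(N+\alpha)/2$. Then $N_1^\star,N_2^\star$ are integers with $N_1^\star\ge0$, $N_2^\star\ge1$, the array $\mathbb{S}^\star(N)\triangleq\mathbb{D}_{\mathrm{CNA}}(N_1^\star,N_2^\star)$ has exactly $N$ elements, its sum set is $\mathbb{S}^\star(N)+\mathbb{S}^\star(N)=[0:2\max\mathbb{S}^\star(N)]$ with $$|\mathbb{S}^\star(N)+\mathbb{S}^\star(N)|=\frac{N^2+6N-7}{4}-\frac{(\alpha-1)^2}{4}+1,$$ and the redundancy $R(N)\triangleq\dfrac{N(N+1)}{2\,|\mathbb{S}^\star(N)+\mathbb{S}^\star(N)|}$ satisfies $\lim_{N\to\infty}R(N)=2$.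
   Context: For $N_1\in\mathbb{N}$, $N_2\ge1$: $\mathbb{D}_1=[0:N_1-1]$, $\mathbb{D}_2=\{j(N_1+1): j\in[0:N_2-1]\}$, and $\mathbb{D}_{\mathrm{CNA}}(N_1,N_2)=\mathbb{D}_1\cup(\mathbb{D}_2+N_1)\cup(\mathbb{D}_1+(N_1+1)N_2)\subset\mathbb{N}$. Sum set $\mathbb{A}+\mathbb{B}=\{a+b:a\in\mathbb{A},b\in\mathbb{B}\}$, shift $\mathbb{A}+c=\{a+c\}$, $[a:b]=\{c\in\mathbb{Z}:a\le c\le b\}$. *)

(* Defs.v *)
From HB Require Import structures.
From mathcomp Require Import all_boot all_order all_algebra.
From mathcomp Require Import all_classical all_reals all_analysis.
Set Implicit Arguments. Unset Strict Implicit. Unset Printing Implicit Defensive.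
Import Order.TTheory GRing.Theory Num.Theory.

(* Finite subsets of N are represented by duplicate-free sequences of nat. *)

Definition D1 (N1 : nat) : seq nat := iota 0 N1.
Definition D2 (N1 N2 : nat) : seq nat := [seq j * (N1 + 1) | j <- iota 0 N2].
Definition shift (A : seq nat) (c : nat) : seq nat := [seq a + c | a <- A].
Definition DCNA (N1 N2 : nat) : seq nat :=
  undup (D1 N1 ++ shift (D2 N1 N2) N1 ++ shift (D1 N1) ((N1 + 1) * N2)).
Definition sumset (A B : seq nat) : seq nat :=
  undup [seq a + b | a <- A, b <- B].
Definition maxS (A : seq nat) : nat := \max_(a <- A) a.

Definition alpha (N : nat) : int := ((((N %% 4) + 1) %% 4)%N)%:Z - 1.
(* N1star = (N - alpha)/4 , N2star = (N + alpha)/2 (integer division; exactness is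
   part of the theorem) *)
Definition N1star (N : nat) : int := ((N%:Z - alpha N) %/ 4)%Z.
Definition N2star (N : nat) : int := ((N%:Z + alpha N) %/ 2)%Z.
(* Sstar N = D_CNA(N1star, N2star) [N1star, N2star are nonnegative by the theorem] *)
Definition Sstar (N : nat) : seq nat := DCNA (absz (N1star N)) (absz (N2star N)).
Definition redundancy (R : realType) (N : nat) : R :=
  ((N * (N + 1))%:R / (2 * (size (sumset (Sstar N) (Sstar N)))%:R))%R.

(* Main.v *)
Require Import Defs.
From HB Require Import structures.
From mathcomp Require Import all_boot all_order all_algebra.
From mathcomp Require Import all_classical all_reals all_analysis.
From mathcomp Require Import zify lra.
Import Order.TTheory GRing.Theory Num.Theory.
Import numFieldNormedType.Exports.
Set Implicit Arguments. Unset Strict Implicit.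

Definition inS (a b x : nat) : bool :=
  [|| x < a, [&& a <= x, (a+1) %| x.+1 & x < (a+1)*b] |
      ((a+1)*b <= x) && (x < (a+1)*b + a)].

Lemma memS a b x : (x \in DCNA a b) = inS a b x.
Proof.
rewrite /DCNA /inS mem_undup !mem_cat /D1 /D2 /Defs.shift mem_iota add0n leq0n /=.
apply/idP/idP.
- case/or3P.
  + by move=> ->.
  + case/mapP=> y /mapP [j]; rewrite mem_iota add0n => /andP[_ jb] -> ->.
    apply/orP; right; apply/orP; left.
    apply/and3P; split.
    * lia.
    * apply/dvdnP; exists j.+1; lia.
    * nia.
  + case/mapP=> y; rewrite mem_iota add0n => /andP[_ ya] ->.
    apply/orP; right; apply/orP; right; apply/andP; split; lia.
- case/or3P.
  + by move=> ->.
  + case/and3P=> ax /dvdnP [k hk] xb.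
    apply/orP; right; apply/orP; left.
    apply/mapP; exists ((k-1) * (a+1)); last by nia.
    apply/mapP; exists (k-1) => //; rewrite mem_iota add0n leq0n /=.
    have : k * (a+1) <= (a+1) * b by lia.
    rewrite mulnC leq_pmul2l ?addn1 // => kb.
    nia.
  + case/andP=> h1 h2.
    apply/orP; right; apply/orP; right.
    apply/mapP; exists (x - (a+1)*b); last lia.
    rewrite mem_iota; apply/andP; split; lia.
Qed.

Lemma uniqL a b : 0 < b ->
  uniq (D1 a ++ Defs.shift (D2 a b) a ++ Defs.shift (D1 a) ((a + 1) * b)).
Proof.
move=> b0; rewrite !cat_uniq /D1 /D2 /Defs.shift iota_uniq /=.
have inj1 : injective (fun x => x + a) by move=> x y; lia.
have inj2 : injective (fun x => x + (a+1)*b) by move=> x y; lia.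
apply/and4P; split.
- apply/hasPn => x; rewrite mem_cat => /orP [] /mapP [y].
  + case/mapP=> j; rewrite mem_iota => /andP[_ jb] -> ->; rewrite mem_iota; lia.
  + rewrite mem_iota => /andP[_ ya] ->; rewrite mem_iota; nia.
- rewrite map_inj_uniq // map_inj_uniq ?iota_uniq //; move=> x y /=; nia.
- apply/hasPn => x /mapP [y]; rewrite mem_iota => /andP[_ ya] ->.
  apply/negP => /mapP [z] /mapP [j]; rewrite mem_iota => /andP[_ jb] -> .
  nia.
- by rewrite map_inj_uniq ?iota_uniq.
Qed.

Lemma sizeS a b : 0 < b -> size (DCNA a b) = 2 * a + b.
Proof.
move=> b0; rewrite /DCNA undup_id ?uniqL // !size_cat /D1 /D2 /Defs.shift !size_map !size_iota.
lia.
Qed.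

Lemma S_le a b x : 0 < b -> inS a b x -> x <= (a+1)*b + a - 1.
Proof. rewrite /inS => b0 /or3P [] ?; nia. Qed.

Lemma S_sym a b x : 0 < b -> inS a b x -> inS a b ((a+1)*b + a - 1 - x).
Proof.
move=> b0 h; have hx := S_le b0 h; move: h.
rewrite /inS => /or3P [] h.
- apply/orP; right; apply/orP; right; apply/andP; split; lia.
- case/and3P: h => h1 /dvdnP [k hk] h3.
  apply/orP; right; apply/orP; left; apply/and3P; split.
  + nia.
  + apply/dvdnP; exists (b + 1 - k). 
    have : k <= b + 1 by nia.
    nia.
  + nia.
- apply/orP; left. lia.
Qed.

Lemma S_low a b n : 0 < b -> n <= (a+1)*b + a - 1 ->
  exists x y, [/\ inS a b x, inS a b y & x + y = n].
Proof.
move=> b0 hn.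
have small : forall z, z <= a -> inS a b z.
  move=> z za; rewrite /inS; case: (ltnP z a) => //= h.
  have -> : z = a by lia.
  by rewrite addn1 dvdnn /=; nia.
case hS: (inS a b n).
  exists n, 0; split => //; [apply: small; lia | lia].
move: hS; rewrite /inS => /norP [/negbTE h1 /norP [h2 h3]].
have na : a <= n by lia.
have nb : n < (a+1)*b by move: h3; rewrite negb_and; lia.
set q := n %/ (a+1); set r := n %% (a+1).
have hqr : n = q * (a+1) + r by rewrite /q /r -divn_eq.
have ra : r < a + 1 by rewrite /r ltn_mod; lia.
have rna : r != a.
  apply/eqP => ra'; move: h2; rewrite na nb /= andbT; apply/negP/negPn.
  apply/dvdnP; exists q.+1; lia.
have q1 : 0 < q by nia.
have qb : q < b.
  have : q * (a+1) < (a+1) * b by lia.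
  rewrite mulnC ltn_pmul2l //; lia.
exists (q * (a+1) - 1), (r+1); split.
- rewrite /inS; apply/orP; right; apply/orP; left; apply/and3P; split.
  + nia.
  + apply/dvdnP; exists q; nia.
  + nia.
- apply: small; lia.
- nia.
Qed.

Lemma sumsetS a b : 0 < b ->
  sumset (DCNA a b) (DCNA a b) =i iota 0 (2 * ((a+1)*b + a - 1)).+1.
Proof.
move=> b0 n; rewrite /sumset mem_undup mem_iota add0n leq0n /=.
apply/allpairsP/idP.
- case=> [[x y]] /= [hx hy ->]; rewrite !memS in hx hy.
  have := S_le b0 hx; have := S_le b0 hy; lia.
- move=> hn.
  case: (leqP n ((a+1)*b + a - 1)) => hM.
  + have [x [y [hx hy hxy]]] := S_low b0 hM.
    by exists (x, y); rewrite !memS.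
  + have [x [y [hx hy hxy]]] := @S_low a b (2 * ((a+1)*b + a - 1) - n) b0 ltac:(lia).
    exists ((a+1)*b + a - 1 - x, (a+1)*b + a - 1 - y); rewrite !memS /=.
    split; try apply: S_sym => //.
    have := S_le b0 hx; have := S_le b0 hy; lia.
Qed.

Lemma maxSS a b : 0 < b -> maxS (DCNA a b) = (a+1)*b + a - 1.
Proof.
move=> b0; apply/eqP; rewrite eqn_leq; apply/andP; split.
- apply/bigmax_leqP_seq => x; rewrite memS => hx _; exact: S_le.
- apply: (leq_bigmax_seq (F := id)) => //; rewrite memS.
  have := @S_sym a b 0 b0; rewrite subn0; apply.
  rewrite /inS; case: a => [|a] //=.
  by rewrite add0n mul1n b0.
Qed.

Lemma sizesum a b : 0 < b ->
  size (sumset (DCNA a b) (DCNA a b)) = (2 * ((a+1)*b + a - 1)).+1.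
Proof.
move=> b0; rewrite -(size_iota 0 (2 * ((a+1)*b + a - 1)).+1).
apply: perm_size; apply: uniq_perm; first exact: undup_uniq.
  exact: iota_uniq.
exact: sumsetS.
Qed.
Lemma caseN N : (1 <= N)%N -> exists n1 n2 : nat,
  [/\ N1star N = Posz n1, N2star N = Posz n2, ((0 < n2)%N /\ N = (2 * n1 + n2)%N),
      ((4 * N1star N = (Posz N) - alpha N)%R /\ (2 * N2star N = (Posz N) + alpha N)%R) &
      (4 * (Posz (2 * ((n1+1)*n2 + n1 - 1)).+1)
         = (Posz (N^2+6*N)%N) - 7 - (alpha N - 1)^+2 + 4)%R].
Proof.
move=> N1.
have hN := divn_eq N 4.
set m := N %/ 4 in hN.
have hk : (N %% 4 < 4)%N by rewrite ltn_mod.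
have key : forall (a : int) (n1 n2 : nat), alpha N = a ->
   (Posz N - a = Posz n1 * 4)%R -> (Posz N + a = Posz n2 * 2)%R ->
   N1star N = Posz n1 /\ N2star N = Posz n2.
  move=> a n1 n2 ha h1 h2; rewrite /N1star /N2star ha; split.
  - by transitivity ((Posz n1 * 4) %/ 4)%Z; [congr divz | rewrite mulzK].
  - by transitivity ((Posz n2 * 2) %/ 2)%Z; [congr divz | rewrite mulzK].
move: hN hk; case e: (N %% 4) => [|[|[|[|k]]]] // hN _.
- have [e1 e2] := @key 0 m (2 * m) ltac:(by rewrite /alpha e) ltac:(lia) ltac:(lia).
  exists m, (2 * m); rewrite e1 e2 /alpha e; split => //; [split; lia | split; lia | nia].
- have [e1 e2] := @key 1 m (2 * m + 1) ltac:(by rewrite /alpha e) ltac:(lia) ltac:(lia).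
  exists m, (2 * m + 1); rewrite e1 e2 /alpha e; split => //; [split; lia | split; lia | nia].
- have [e1 e2] := @key 2 m (2 * m + 2) ltac:(by rewrite /alpha e) ltac:(lia) ltac:(lia).
  exists m, (2 * m + 2); rewrite e1 e2 /alpha e; split => //; [split; lia | split; lia | nia].
- have [e1 e2] := @key (-1)%R (m + 1) (2 * m + 1) ltac:(by rewrite /alpha e) ltac:(lia) ltac:(lia).
  exists (m + 1), (2 * m + 1); rewrite e1 e2 /alpha e; split => //; [split; lia | split; lia | nia].
Qed.


Lemma ratid (s N : nat) (a : int) :
  (4 * Posz s = Posz (N^2+6*N)%N - 7 - (a - 1)^+2 + 4)%R ->
  ((s%:R : rat) = ((N ^ 2 + 6 * N)%N%:R - 7) / 4 - (a%:~R - 1) ^+ 2 / 4 + 1)%R.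
Proof.
move=> h.
have h2 : (4 * (s%:R : rat) = ((N^2+6*N)%N)%:R - 7 - (a%:~R - 1)^+2 + 4)%R.
  have h3 : (((4 * Posz s)%:~R : rat) = (Posz (N^2+6*N)%N - 7 - (a - 1)^+2 + 4)%:~R)%R by rewrite h.
  move: h3; rewrite !(intrD, intrB, intrM, intrN, rmorphXn) !rmorph1.
  have e1 : ((((N^2+6*N)%N)%:~R : rat) = ((N^2+6*N)%N)%:R)%R by [].
  have e2 : (((Posz s)%:~R : rat) = s%:R)%R by [].
  rewrite e1 e2 expr2 => h3; lra.
move: h2; set Y := ((a%:~R - 1) ^+ 2)%R; set X := (((N ^ 2 + 6 * N)%N)%:R : rat).
move=> h2; lra.
Qed.

Lemma bounds N : (1 <= N)%N ->
  (4 * size (sumset (Sstar N) (Sstar N)) + 3 <= N^2 + 6 * N <=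
   4 * size (sumset (Sstar N) (Sstar N)) + 7)%N.
Proof.
move=> N1; have [n1 [n2 [e1 e2 [n20 hN] _ h]]] := caseN N1.
rewrite /Sstar e1 e2 /= sizesum //.
have ha : (-1 <= alpha N <= 2)%R by rewrite /alpha; lia.
move: h ha; set a := alpha N => h ha.
have hsq : (0 <= (a - 1)^+2 <= 4)%R by nia.
move: h hsq; set s := (2 * ((n1 + 1) * n2 + n1 - 1)).+1.
lia.
Qed.
Section RB.
Local Open Scope ring_scope.
Lemma real_bound (R : realType) (n s : nat) (e : R) : 0 < e -> (2 <= n)%N ->
  (4*s+3 <= n^2+6*n <= 4*s+7)%N -> (n.+1%:R^-1 < e/20) ->
  `|2 - (n*(n+1))%:R / (2 * s%:R)| <= e.
Proof.
move=> e0 n2 /andP [b1 b2] hinv.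
have b1' : (4 * s%:R + 3 <= n%:R ^+ 2 + 6 * n%:R :> R).
  have := b1; rewrite -(ler_nat R) !natrD !natrM => h; rewrite expr2; lra.
have b2' : (n%:R ^+ 2 + 6 * n%:R <= 4 * s%:R + 7 :> R).
  have := b2; rewrite -(ler_nat R) !natrD !natrM => h; rewrite expr2; lra.
have n2' : (2 <= n%:R :> R) by rewrite (ler_nat R 2 n).
set N := n%:R in b1' b2' n2' *.
set S := s%:R in b1' b2' *.
have S0 : 0 < S by nra.
have hN1 : (n.+1%:R : R) = N + 1 by rewrite -addn1 natrD.
rewrite hN1 in hinv.
have h20 : 20 < e * (N + 1).
  have hm : (N + 1)^-1 * (N + 1) = 1 by rewrite mulVf //; lra.
  nra.
rewrite natrM natrD -/N.
set x := N * (N + 1%:R) / (2 * S).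
have hx : x * (2 * S) = N * (N + 1).
  by rewrite /x mulfVK // ; lra.
rewrite ler_norml; apply/andP; split.
- nra.
- case: (lerP 2 e) => he.
  + have : 0 <= x by rewrite /x; apply: divr_ge0; nra.
    lra.
  + have h2a : 0 <= e * (4 * S - (N^+2 + 6 * N - 7)) by apply: mulr_ge0; lra.
    have h2b : 0 <= (e * (N + 1) - 20) * (N + 5) by apply: mulr_ge0; lra.
    have h2 : 5 * N <= 2 * S * e by nra.
    nra.
Qed.
End RB.

Lemma limR (R : realType) : ((fun N : nat => redundancy R N) @ \oo --> (2%R : R))%classic.
Proof.
apply/cvgrPdist_le => e e0.
have e20 : (0 < e / 20 :> R)%R by rewrite divr_gt0.
near=> n.
have n2 : (2 <= n)%N by near: n; exists 2%N.
have hinv : (n.+1%:R^-1 < e / 20 :> R)%R.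
  by near: n; exact: (near_infty_natSinv_lt (PosNum e20)).
rewrite /redundancy; apply: real_bound => //.
apply: bounds; lia.
Unshelve. all: end_near.
Qed.

Theorem mainTheorem5 :
  (forall N : nat, (1 <= N)%N ->
     (4 * N1star N = N%:Z - alpha N)%R /\
         (2 * N2star N = N%:Z + alpha N)%R /\
         (0 <= N1star N)%R /\ (1 <= N2star N)%R /\
         size (Sstar N) = N /\
         sumset (Sstar N) (Sstar N) =i iota 0 (2 * maxS (Sstar N)).+1 /\
       (((size (sumset (Sstar N) (Sstar N)))%:R : rat)
           = ((N ^ 2 + 6 * N)%N%:R - 7) / 4 - ((alpha N)%:~R - 1) ^+ 2 / 4 + 1)%R)
  /\ (forall R : realType,
        (fun N : nat => redundancy R N) @ \oo --> (2%R : R))%classic.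
Proof.
split; last exact: limR.
move=> N N1; have [n1 [n2 [e1 e2 [n20 hN] [h1 h2] h]]] := caseN N1.
split => //; split => //.
split; first by rewrite e1.
split; first by rewrite e2; lia.
rewrite /Sstar e1 e2 /=.
split; first by rewrite sizeS // hN.
split; first by rewrite maxSS //; exact: sumsetS.
rewrite sizesum //; exact: ratid.
Qed.
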